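(* If $K$ is a class of structures with $K\le_c PF$, then $K$ has the substructure property: no $\mathcal{A}_1\in K$ is isomorphic to a substructure of some $\mathcal{A}_2\in K$ unless $\mathcal{A}_1\cong\mathcal{A}_2$.
   Context: Conventions: every structure is for a finite relational language with universe a subset of $\omega$; a class is closed under isomorphism. $D(\mathcal{A})$ is the atomic diagram of $\mathcal{A}$. A computable transformation from $K$ to $K'$ is a c.e. set $\Phi$ of pairs $(\alpha,\varphi)$, $\alpha$ a finite subset of the atomic diagram of a finite structure in the language of $K$, $\varphi$ an atomic sentence or negation of one in the language of $K'$, such that for every $\mathcal{A}\in K$, $\{\varphi:(\exists\alpha\subseteq D(\mathcal{A}))(\alpha,\varphi)\in\Phi\}=D(\mathcal{B})$ for some $\mathcal{B}\in K'$. A computable embedding is a computable transformation with $\mathcal{A}\cong\mathcal{A}'\iff\Phi(\mathcal{A})\cong\Phi(\mathcal{A}')$; $K\le_c K'$ means one exists. $PF$ is the class of finite prime fields (in a relational language). *)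

(* Defs.v *)
From Stdlib Require Import Arith List ZArith Znumtheory.
Import ListNotations.
Local Open Scope nat_scope.

(** A finite relational language: the list of arities of its relation
    symbols; symbol [i] has arity [nth i L 0]. *)
Definition language := list nat.

Record structure (L : language) := mkStructure {
  dom : nat -> Prop;
  rel : nat -> list nat -> Prop;
  rel_ok : forall i xs, rel i xs ->
    i < length L /\ length xs = nth i L 0 /\ Forall dom xs
}.
Arguments dom {L} _ _.
Arguments rel {L} _ _ _.

(** Atomic sentences (constants are elements of omega) and literals
    (atomic sentence or its negation: [(a, true)] is [a], [(a, false)] is [~a]). *)
Inductive atom : Type :=
  | AEq : nat -> nat -> atom
  | ARel : nat -> list nat -> atom.

Definition literal := (atom * bool)%type.

Definition atom_consts (a : atom) : list nat :=
  match a with AEq x y => [x; y] | ARel _ xs => xs end.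

Definition atom_in_lang (L : language) (a : atom) : Prop :=
  match a with
  | AEq _ _ => True
  | ARel i xs => i < length L /\ length xs = nth i L 0
  end.

Definition literal_in_lang (L : language) (l : literal) : Prop :=
  atom_in_lang L (fst l).

Definition atom_holds {L} (A : structure L) (a : atom) : Prop :=
  match a with
  | AEq x y => x = y
  | ARel i xs => rel A i xs
  end.

Definition diagram {L} (A : structure L) (l : literal) : Prop :=
  literal_in_lang L l /\ Forall (dom A) (atom_consts (fst l)) /\
  (atom_holds A (fst l) <-> snd l = true).

Definition finite_structure {L} (A : structure L) : Prop :=
  exists s : list nat, forall x, dom A x <-> In x s.

Definition iso {L} (A B : structure L) : Prop :=
  exists f : nat -> nat,
    (forall x, dom A x -> dom B (f x)) /\
    (forall x y, dom A x -> dom A y -> f x = f y -> x = y) /\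
    (forall y, dom B y -> exists x, dom A x /\ f x = y) /\
    (forall i xs, Forall (dom A) xs -> (rel A i xs <-> rel B i (map f xs))).

Definition substructure {L} (C A : structure L) : Prop :=
  (forall x, dom C x -> dom A x) /\
  (forall i xs, Forall (dom C) xs -> (rel C i xs <-> rel A i xs)).

Definition iso_closed {L} (K : structure L -> Prop) : Prop :=
  forall A B, K A -> iso A B -> K B.

(** Computable transformations / embeddings. A set of pairs is c.e. if it is
    the range of a (Rocq, hence computable) enumeration. *)
Definition ce {X : Type} (P : X -> Prop) : Prop :=
  exists f : nat -> option X, forall x, P x <-> exists n, f n = Some x.

Definition Phi_output {L} (Phi : list literal * literal -> Prop)
  (A : structure L) (phi : literal) : Prop :=
  exists alpha, Phi (alpha, phi) /\ Forall (diagram A) alpha.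

Definition computable_transformation {L L' : language}
  (K : structure L -> Prop) (K' : structure L' -> Prop)
  (Phi : list literal * literal -> Prop) : Prop :=
  ce Phi /\
  (forall alpha phi, Phi (alpha, phi) ->
     (exists B : structure L, finite_structure B /\ Forall (diagram B) alpha) /\
     literal_in_lang L' phi) /\
  (forall A, K A -> exists B, K' B /\ forall phi, Phi_output Phi A phi <-> diagram B phi).

Definition computable_embedding {L L' : language}
  (K : structure L -> Prop) (K' : structure L' -> Prop)
  (Phi : list literal * literal -> Prop) : Prop :=
  computable_transformation K K' Phi /\
  forall A A' (B B' : structure L'), K A -> K A' ->
    (forall phi, Phi_output Phi A phi <-> diagram B phi) ->
    (forall phi, Phi_output Phi A' phi <-> diagram B' phi) ->
    (iso A A' <-> iso B B').

Definition le_c {L L' : language}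
  (K : structure L -> Prop) (K' : structure L' -> Prop) : Prop :=
  exists Phi, computable_embedding K K' Phi.

(** Finite prime fields in the relational language with two ternary
    symbols: 0 = graph of addition, 1 = graph of multiplication. *)
Definition LPF : language := [3; 3].

Definition Zp_rel (p : nat) (i : nat) (xs : list nat) : Prop :=
  match xs with
  | [a; b; c] => a < p /\ b < p /\ c < p /\
      ((i = 0 /\ (a + b) mod p = c) \/ (i = 1 /\ (a * b) mod p = c))
  | _ => False
  end.

Lemma Zp_rel_ok p : forall i xs, Zp_rel p i xs ->
  i < length LPF /\ length xs = nth i LPF 0 /\ Forall (fun x => x < p) xs.
Proof.
  intros i xs H. destruct xs as [|a [|b [|c [|d xs]]]]; simpl in H; try tauto.
  destruct H as (Ha & Hb & Hc & [[-> _]|[-> _]]); simpl;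
    repeat split; repeat constructor; auto.
Qed.

Definition Zp_struct (p : nat) : structure LPF :=
  mkStructure LPF (fun x => x < p) (Zp_rel p) (Zp_rel_ok p).

Definition PF (C : structure LPF) : Prop :=
  exists p, prime (Z.of_nat p) /\ iso (Zp_struct p) C.

Definition substructure_property {L} (K : structure L -> Prop) : Prop :=
  forall A1 A2, K A1 -> K A2 ->
    (exists C, substructure C A2 /\ iso A1 C) -> iso A1 A2.

(* Main.v *)
Require Import Defs.
From Stdlib Require Import Arith List ZArith Znumtheory Lia Classical.
Import ListNotations.
Local Open Scope nat_scope.

Lemma arith0 (a q : nat) : a < q -> (a + a) mod q = a -> a = 0.
Proof.
  intros Ha H. pose proof (Nat.div_mod_eq (a+a) q) as E.
  rewrite H in E. remember ((a+a)/q) as t. destruct t; nia.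
Qed.

Lemma arith1 (a q : nat) : prime (Z.of_nat q) -> 0 < a -> a < q ->
  (a * a) mod q = a -> a = 1.
Proof.
  intros Hq H0 Ha H. pose proof (Nat.div_mod_eq (a*a) q) as E.
  rewrite H in E. remember ((a*a)/q) as t.
  assert (Hd : (Z.of_nat q | Z.of_nat a * (Z.of_nat a - 1))%Z).
  { exists (Z.of_nat t). apply (f_equal Z.of_nat) in E.
    rewrite Nat2Z.inj_add, !Nat2Z.inj_mul in E. nia. }
  destruct (prime_mult _ Hq _ _ Hd) as [D|D].
  - apply Z.divide_pos_le in D; lia.
  - destruct (Nat.eq_dec a 1) as [|Hn]; auto.
    apply Z.divide_pos_le in D; lia.
Qed.

Lemma pf_sub (B1 B2 : structure LPF) (p q : nat) :
  prime (Z.of_nat p) -> prime (Z.of_nat q) ->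
  iso (Zp_struct p) B1 -> iso (Zp_struct q) B2 ->
  (forall x, dom B1 x -> dom B2 x) ->
  (forall i xs, rel B1 i xs -> rel B2 i xs) ->
  forall y, dom B2 y -> dom B1 y.
Proof.
  intros Hp Hq [f (fdom & finj & fsurj & frel)] [g (gdom & ginj & gsurj & grel)] Hdom Hrel.
  simpl in *.
  pose proof (prime_ge_2 _ Hp). pose proof (prime_ge_2 _ Hq).
  assert (T1 : forall i a b c, Zp_rel p i [a;b;c] -> rel B2 i [f a; f b; f c]).
  { intros i a b c Hz. apply Hrel.
    pose proof (Zp_rel_ok p i [a;b;c] Hz) as (_ & _ & HF).
    apply (frel i [a;b;c] HF) in Hz. exact Hz. }
  assert (T2 : forall i a b c, a < q -> b < q -> c < q ->
             rel B2 i [g a; g b; g c] -> Zp_rel q i [a;b;c]).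
  { intros i a b c Ha Hb Hc Hr. apply (grel i [a;b;c]); auto. }
  assert (Ex : forall x, x < p -> exists a, a < q /\ f x = g a).
  { intros x Hx. destruct (gsurj (f x)) as (a & Ha & E); auto. eauto. }
  destruct (Ex 0) as (a0 & Ha0 & E0); [lia|].
  assert (a0 = 0).
  { assert (Z0 : Zp_rel p 0 [0;0;0]).
    { simpl. repeat split; try lia. left. split; auto. apply Nat.mod_0_l; lia. }
    apply T1 in Z0. rewrite E0 in Z0. apply T2 in Z0; auto.
    destruct Z0 as (_ & _ & _ & [[_ Z]|[Z _]]); [|lia].
    eapply arith0; eauto. }
  subst a0.
  destruct (Ex 1) as (a1 & Ha1 & E1); [lia|].
  assert (a1 = 1).
  { assert (Z1 : Zp_rel p 1 [1;1;1]).
    { simpl. repeat split; try lia. right. split; auto. apply Nat.mod_small; lia. }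
    apply T1 in Z1. rewrite E1 in Z1. apply T2 in Z1; auto.
    destruct Z1 as (_ & _ & _ & [[Z _]|[_ Z]]); [lia|].
    assert (a1 <> 0).
    { intros ->. assert (1 = 0); [|lia]. apply finj; try lia; congruence. }
    apply arith1 with q; auto; lia. }
  subst a1.
  assert (K : forall k, f (k mod p) = g (k mod q)).
  { induction k.
    - rewrite !Nat.mod_0_l by lia. auto.
    - destruct (Ex (S k mod p)) as (c & Hc & Ec). { apply Nat.mod_upper_bound; lia. }
      assert (Z : Zp_rel p 0 [k mod p; 1; S k mod p]).
      { simpl. pose proof (Nat.mod_upper_bound k p). pose proof (Nat.mod_upper_bound (S k) p).
        repeat split; try lia. left. split; auto.
        replace (S k) with (k + 1) by lia. apply Nat.add_mod_idemp_l; lia. }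
      apply T1 in Z. rewrite IHk, E1, Ec in Z. apply T2 in Z; auto;
        [|apply Nat.mod_upper_bound; lia].
      destruct Z as (_ & _ & _ & [[_ Z]|[Z _]]); [|lia].
      rewrite Ec. f_equal. rewrite <- Z.
      replace (S k) with (k + 1) by lia. apply Nat.add_mod_idemp_l; lia. }
  intros y Hy. destruct (gsurj y Hy) as (m & Hm & <-).
  rewrite <- (Nat.mod_small m q) by auto. rewrite <- K. apply fdom.
  apply Nat.mod_upper_bound; lia.
Qed.

Lemma iso_trans {L} (A B C : structure L) : iso A B -> iso B C -> iso A C.
Proof.
  intros [f (fd & fi & fs & fr)] [g (gd & gi & gs & gr)].
  exists (fun x => g (f x)). repeat split.
  - auto.
  - intros x y Hx Hy E. apply fi; auto.
  - intros y Hy. destruct (gs y Hy) as (x & Hx & <-).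
    destruct (fs x Hx) as (z & Hz & <-). eauto.
  - intros Hr. rewrite <- map_map. apply gr.
    + apply Forall_map. eapply Forall_impl; [|eauto]. auto.
    + apply fr; auto.
  - intros Hr. rewrite <- map_map in Hr. apply fr; auto. apply gr; auto.
    apply Forall_map. eapply Forall_impl; [|eauto]. auto.
Qed.

Lemma diag_sub {L} (C A : structure L) : substructure C A ->
  forall l, diagram C l -> diagram A l.
Proof.
  intros [Hd Hr] [a b] (H1 & H2 & H3). split; [auto|split].
  - eapply Forall_impl; [|eauto]. auto.
  - destruct a; simpl in *; auto. rewrite <- H3. symmetry. apply Hr. auto.
Qed.

Theorem proposition3p3 (L : language) (K : structure L -> Prop) :
  iso_closed K -> le_c K PF -> substructure_property K.
Proof.
  intros Hcl [Phi [(_ & _ & Htr) Hemb]] A1 A2 HA1 HA2 (C & Hsub & Hiso).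
  assert (HC : K C) by exact (Hcl A1 C HA1 Hiso).
  destruct (Htr C HC) as (BC & [p (Hp & IC)] & HBC).
  destruct (Htr A2 HA2) as (B2 & [q (Hq & I2)] & HB2).
  assert (Dsub : forall l, diagram BC l -> diagram B2 l).
  { intros l Hl. apply HB2. apply HBC in Hl. destruct Hl as (al & HP & HF).
    exists al. split; auto. eapply Forall_impl; [|eauto]. apply diag_sub; auto. }
  assert (Hdom : forall x, dom BC x -> dom B2 x).
  { intros x Hx. assert (D : diagram BC (AEq x x, true)).
    { repeat split; simpl; auto. }
    apply Dsub in D. destruct D as (_ & D & _). inversion D; auto. }
  assert (Hrel : forall i xs, rel BC i xs -> rel B2 i xs).
  { intros i xs Hr. pose proof (rel_ok _ BC i xs Hr) as (a & b & c).
    assert (D : diagram BC (ARel i xs, true)).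
    { repeat split; simpl; auto. }
    apply Dsub in D. destruct D as (_ & _ & D). apply D. auto. }
  assert (Hback : forall y, dom B2 y -> dom BC y)
    by exact (pf_sub BC B2 p q Hp Hq IC I2 Hdom Hrel).
  assert (IB : iso BC B2).
  { exists (fun x => x). repeat split; auto.
    - intros y Hy. eauto.
    - intros Hr. rewrite map_id. auto.
    - rewrite map_id. intros Hr. apply NNPP. intros Hn.
      pose proof (rel_ok _ B2 i xs Hr) as (a & b & c).
      assert (D : diagram BC (ARel i xs, false)).
      { repeat split; simpl; auto; intros; try contradiction; discriminate. }
      apply Dsub in D. destruct D as (_ & _ & D). simpl in D.
      apply D in Hr. discriminate. }
  apply (iso_trans A1 C A2); auto.
  apply (proj2 (Hemb C A2 BC B2 HC HA2 HBC HB2)). auto.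
Qed.
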